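(* If $(G,\sigma)$ is a signed graph and $(F,\pi)$ is a signed forest with at least one edge, then $\chi_s((G,\sigma)\,\square\,(F,\pi))=\chi_s((G,\sigma)\,\square\,K_2^+)$. In particular, for all integers $n,m\ge 2$ and all signatures $\sigma_1$ of $P_n$ and $\sigma_2$ of $P_m$, $\chi_s((P_n,\sigma_1)\,\square\,(P_m,\sigma_2))=2$.
   Context: A signed graph $(G,\sigma)$ is a simple loopless undirected graph $G$ with a signature $\sigma:E(G)\to\{+1,-1\}$. Switching a vertex $v$ negates the sign of every edge incident to $v$; two signatures are equivalent if one is obtained from the other by switching a set of vertices. A homomorphism of $(G,\sigma)$ to $(H,\pi)$ is a graph homomorphism $\varphi:G\to H$ for which there is a signature $\sigma'$ equivalent to $\sigma$ with $\pi(\varphi(u)\varphi(v))=\sigma'(uv)$ for every edge $uv$ of $G$. $\chi_s(G,\sigma)$ is the smallest order of a signed graph to which $(G,\sigma)$ admits a homomorphism. The Cartesian product $(G,\sigma)\,\square\,(H,\pi)$ has vertex set $V(G)\times V(H)$, and $(u_1,v_1)(u_2,v_2)$ is an edge of sign $s$ iff either $u_1=u_2$ and $v_1v_2\in E(H)$ with $\pi(v_1v_2)=s$, or $v_1=v_2$ and $u_1u_2\in E(G)$ with $\sigma(u_1u_2)=s$. $K_2^+$ is a single positive edge; $P_n$ is the path on $n$ vertices. *)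

(* Defs.v *)
From Stdlib Require Import ClassicalEpsilon.
From mathcomp Require Import all_boot.
Set Implicit Arguments. Unset Strict Implicit. Unset Printing Implicit Defensive.

(* A finite signed graph: simple loopless graph on a finite vertex type, with a
   signature given as a symmetric boolean function on pairs of vertices
   (sgn x y = true means the edge xy is NEGATIVE; only values on edges matter). *)
Record sgraph := SGraph {
  V :> finType;
  adj : rel V;
  sgn : rel V;
  adj_sym : symmetric adj;
  adj_irr : irreflexive adj;
  sgn_sym : symmetric sgn }.

Definition switched (G : sgraph) (X : {set G}) (u v : G) : bool :=
  sgn u v (+) (u \in X) (+) (v \in X).

Definition shom (G H : sgraph) : Prop :=
  exists (phi : G -> H) (X : {set G}),
    forall u v : G, adj u v ->
      adj (phi u) (phi v) /\ sgn (phi u) (phi v) = switched X u v.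

Definition has_hom_of_order (G : sgraph) (n : nat) : bool :=
  if excluded_middle_informative (exists H : sgraph, #|H| = n /\ shom G H)
  then true else false.

Lemma shom_refl (G : sgraph) : shom G G.
Proof.
exists id, set0 => u v Huv; split => //.
by rewrite /switched !inE !addbF.
Qed.

Lemma has_hom_self (G : sgraph) : exists n, has_hom_of_order G n.
Proof.
exists #|G|; rewrite /has_hom_of_order.
case: excluded_middle_informative => // [[]].
by exists G; split => //; apply: shom_refl.
Qed.

Definition chi_s (G : sgraph) : nat := ex_minn (has_hom_self G).

Section Product.
Variables G H : sgraph.
Definition cp_adj : rel (G * H)%type := fun x y =>
  ((x.1 == y.1) && adj x.2 y.2) || ((x.2 == y.2) && adj x.1 y.1).
Definition cp_sgn : rel (G * H)%type := fun x y =>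
  if x.1 == y.1 then sgn x.2 y.2 else sgn x.1 y.1.
Lemma cp_adj_sym : symmetric cp_adj.
Proof. by move=> x y; rewrite /cp_adj eq_sym (eq_sym x.2) adj_sym (adj_sym x.1). Qed.
Lemma cp_adj_irr : irreflexive cp_adj.
Proof. by move=> x; rewrite /cp_adj !adj_irr !andbF. Qed.
Lemma cp_sgn_sym : symmetric cp_sgn.
Proof. by move=> x y; rewrite /cp_sgn eq_sym sgn_sym (sgn_sym x.1). Qed.
Definition cprod : sgraph := SGraph cp_adj_sym cp_adj_irr cp_sgn_sym.
End Product.
Notation "G \square H" := (cprod G H) (at level 40, left associativity).

Definition K2_adj : rel bool := fun x y => x != y.
Definition K2_sgn : rel bool := fun _ _ => false.
Lemma K2_adj_sym : symmetric K2_adj. Proof. by move=> x y; rewrite /K2_adj eq_sym. Qed.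
Lemma K2_adj_irr : irreflexive K2_adj. Proof. by move=> x; rewrite /K2_adj eqxx. Qed.
Lemma K2_sgn_sym : symmetric K2_sgn. Proof. by []. Qed.
Definition K2plus : sgraph := SGraph K2_adj_sym K2_adj_irr K2_sgn_sym.

Definition path_adj n : rel 'I_n := fun i j => (i.+1 == j :> nat) || (j.+1 == i :> nat).
Lemma path_adj_sym n : symmetric (@path_adj n).
Proof. by move=> i j; rewrite /path_adj orbC. Qed.
Lemma path_adj_irr n : irreflexive (@path_adj n).
Proof. by move=> i; rewrite /path_adj orbb gtn_eqF. Qed.
Definition Psg n (s : rel 'I_n) (hs : symmetric s) : sgraph :=
  SGraph (@path_adj_sym n) (@path_adj_irr n) hs.

(* Forests: no cycle (a sequence of >= 3 distinct vertices, consecutive ones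
   adjacent, last adjacent to first). *)
Definition is_forest (F : sgraph) : Prop :=
  forall (x : F) (p : seq F), uniq (x :: p) -> 2 <= size p ->
    path (@adj F) x p -> ~~ adj (last x p) x.

Definition has_edge (F : sgraph) : Prop := exists x y : F, adj x y.

(* Main.v *)
Require Import Defs.
From Stdlib Require Import ClassicalEpsilon.
From mathcomp Require Import all_boot.
Set Implicit Arguments. Unset Strict Implicit. Unset Printing Implicit Defensive.

Lemma shom_trans (A B C : sgraph) : shom A B -> shom B C -> shom A C.
Proof.
move=> [phi [X HX]] [psi [Y HY]].
exists (psi \o phi), [set u | (u \in X) (+) (phi u \in Y)] => u v Huv /=.
have [H1 H2] := HX u v Huv.
have [H3 H4] := HY _ _ H1.
split => //; rewrite H4 /switched H2 /switched !inE.
by case: (sgn u v); case: (u \in X); case: (v \in X); case: (phi u \in Y); case: (phi v \in Y).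
Qed.

Lemma chi_le (A B : sgraph) : shom A B -> chi_s A <= chi_s B.
Proof.
move=> hAB; rewrite /chi_s.
case: ex_minnP => a Ha Hmin; case: ex_minnP => b Hb _.
apply: Hmin; move: Hb; rewrite /has_hom_of_order.
case: excluded_middle_informative => // [[H [cH hBH]]] _.
case: excluded_middle_informative => // [[]].
by exists H; split => //; apply: shom_trans hBH.
Qed.

Definition potential (F : sgraph) (f : F -> bool * bool) :=
  forall a b, adj a b -> (f a).1 != (f b).1 /\ sgn a b = (f a).2 (+) (f b).2.

Lemma leaf (F : sgraph) : is_forest F -> forall S : {set F}, S != set0 ->
  exists2 v, v \in S & #|[set z in S | adj v z]| <= 1.
Proof.
move=> HF S S0.
case: (boolP [exists v in S, #|[set z in S | adj v z]| <= 1]).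
  by move/exists_inP.
move/exists_inPn => Hno.
have claim : forall k, exists (w : F) q, [/\ size q = k, uniq (w :: q), path (@adj F) w q & all (mem S) (w :: q)].
  elim => [|k [w [q [Hs Hu Hp Ha]]]].
    case/set0Pn: S0 => w Hw; exists w, [::]; split => //=; by rewrite Hw.
  have Hw : w \in S by move: Ha => /= /andP[].
  have := Hno w Hw; rewrite -ltnNge => /card_gt1P [z1 [z2 [Hz1 Hz2 Hne]]].
  move: Hz1 Hz2; rewrite !inE => /andP [Sz1 Az1] /andP [Sz2 Az2].
  have ext : forall z, z \in S -> adj w z -> z \notin w :: q ->
      exists (w' : F) q', [/\ size q' = k.+1, uniq (w' :: q'), path (@adj F) w' q' & all (mem S) (w' :: q')].
    move=> z Sz Az Hz; exists z, (w :: q); split => //=.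
    - by rewrite Hs.
    - by rewrite Hz.
    - by rewrite adj_sym Az.
    - by rewrite Sz.
  case: (boolP (z1 \in w :: q)) => Hq1; last exact: ext Hq1.
  case: (boolP (z2 \in w :: q)) => Hq2; last exact: ext Hq2.
  exfalso.
  have inq : forall z, adj w z -> z \in w :: q -> z \in q.
    move=> z Az; rewrite inE => /orP [/eqP E|//].
    by move: Az; rewrite -E adj_irr.
  have Iq1 := inq _ Az1 Hq1; have Iq2 := inq _ Az2 Hq2.
  have cyc : forall z, adj w z -> z \in q -> 0 < index z q -> False.
    move=> z Az zq Hi.
    set i := index z q.
    have ilt : i < size q by rewrite index_mem.
    have Hsz : size (take i.+1 q) = i.+1 by rewrite size_takel.
    have Hl : last w (take i.+1 q) = z.
      by rewrite (last_nth w) Hsz /= nth_take // nth_index.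
    have U : uniq (w :: take i.+1 q).
      move: Hu => /= /andP [Hw' Hu']; rewrite take_uniq // andbT.
      by apply: contra Hw'; apply: mem_take.
    have S2 : 2 <= size (take i.+1 q) by rewrite Hsz.
    have := HF w (take i.+1 q) U S2 (take_path _ Hp).
    by rewrite Hl adj_sym Az.
  case E1: (index z1 q) => [|j].
    case E2: (index z2 q) => [|j2]; last by apply: (cyc z2) => //; rewrite E2.
    move/negP: Hne; apply; apply/eqP.
    by rewrite -(nth_index w Iq1) -(nth_index w Iq2) E1 E2.
  by apply: (cyc z1) => //; rewrite E1.
have [w [q [Hs Hu _ Ha]]] := claim #|S|.
have : size (w :: q) <= size (enum S).
  apply: uniq_leq_size => // x Hx; rewrite mem_enum.
  by move/allP: Ha => /(_ x Hx).
by rewrite -cardE /= Hs ltnn.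
Qed.
Lemma pot_set (F : sgraph) : is_forest F -> forall n (S : {set F}), #|S| <= n ->
  exists f : F -> bool * bool, forall a b, a \in S -> b \in S -> adj a b ->
    (f a).1 != (f b).1 /\ sgn a b = (f a).2 (+) (f b).2.
Proof.
move=> HF; elim => [|n IH] S HS.
  exists (fun _ => (true, true)) => a b Ha.
  by move: HS; rewrite leqn0 => /eqP /cards0_eq E; rewrite E inE in Ha.
case: (eqVneq S set0) => [-> | S0].
  by exists (fun _ => (true, true)) => a b; rewrite inE.
have [v Sv Hv] := leaf HF S0.
have HS' : #|S :\ v| <= n by move: HS; rewrite (cardsD1 v) Sv.
have [f Hf] := IH _ HS'.
have nb : forall z, z \in S -> adj v z -> forall u, u \in S -> adj v u -> z = u.
  move=> z Sz Az u Su Au.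
  by apply: (card_le1_eqP Hv); rewrite inE ?Sz ?Su.
case: (pickP (fun z => (z \in S) && adj v z)) => [u /andP [Su Au] | none].
  have uv : u != v by apply: contraTneq Au => ->; rewrite adj_irr.
  exists (fun z => if z == v then (~~ (f u).1, sgn v u (+) (f u).2) else f z).
  move=> a b Sa Sb Aab.
  case: (eqVneq a v) => [Ea | Na]; case: (eqVneq b v) => [Eb | Nb].
  - by move: Aab; rewrite Ea Eb adj_irr.
  - subst a; have Eb := nb _ Sb Aab _ Su Au; subst b.
    by case: (f u).1; case: (f u).2; case: (sgn v u).
  - subst b; rewrite adj_sym in Aab; have Ea := nb _ Sa Aab _ Su Au; subst a.
    rewrite sgn_sym /=; case: (f u).1; case: (f u).2; by case: (sgn u v).
  - by apply: Hf => //; rewrite !inE ?Na ?Nb.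
exists f => a b Sa Sb Aab.
case: (eqVneq a v) => [Ea | Na].
  by subst a; move: (none b); rewrite Sb Aab.
case: (eqVneq b v) => [Eb | Nb].
  by subst b; move: (none a); rewrite Sa adj_sym Aab.
by apply: Hf => //; rewrite !inE ?Na ?Nb.
Qed.

Lemma forest_pot (F : sgraph) : is_forest F -> exists f, potential (F:=F) f.
Proof.
move=> HF; have [f Hf] := pot_set HF (leqnn #|[set: F]|).
by exists f => a b; apply: Hf; rewrite inE.
Qed.

Lemma hom_to_K2 (G F : sgraph) f : potential (F:=F) f -> shom (G \square F) (G \square K2plus).
Proof.
move=> Hf.
exists (fun u : G * F => (u.1, (f u.2).1)), [set u : G * F | (f u.2).2].
move=> [g a] [g' b]; rewrite /= /cp_adj /cp_sgn /switched /= !inE.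
case: (eqVneq g g') => [<- | ne] /=.
  rewrite !adj_irr !andbF !orbF /cp_sgn /= eqxx => Aab; have [H1 H2] := Hf _ _ Aab.
  by rewrite /K2_adj H1 /K2_sgn H2; case: (f a).2; case: (f b).2.
move=> /andP [/eqP <- Agg']; rewrite eqxx Agg' /cp_sgn /= (negbTE ne); split => //.
by case: (f a).2; case: (sgn g g').
Qed.

Lemma hom_from_K2 (G F : sgraph) : has_edge F -> shom (G \square K2plus) (G \square F).
Proof.
move=> [x [y Axy]].
exists (fun u : G * K2plus => (u.1, if u.2 then y else x)), [set u : G * K2plus | u.2 && sgn x y].
move=> [g a] [g' b]; rewrite /= /cp_adj /cp_sgn /switched /= !inE /K2_adj /K2_sgn.
case: (eqVneq g g') => [<- | ne] /=.
  rewrite !adj_irr !andbF !orbF /cp_sgn /= eqxx => Aab; split.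
    by case: a b Aab => [] [] //= _; rewrite adj_sym.
  case: a b Aab => [] [] //= _; try rewrite (sgn_sym y x); by case: (sgn x y).
move=> /andP [/eqP <- Agg']; rewrite eqxx Agg' /cp_sgn /= (negbTE ne); split => //.
by case: a; case: (sgn x y); case: (sgn g g').
Qed.

Lemma prod_to_K2 (A B : sgraph) f g : potential (F:=A) f -> potential (F:=B) g ->
  shom (A \square B) K2plus.
Proof.
move=> Hf Hg.
exists (fun u : A * B => (f u.1).1 (+) (g u.2).1), [set u : A * B | (f u.1).2 (+) (g u.2).2].
move=> [a b] [a' b']; rewrite /= /cp_adj /cp_sgn /switched /= !inE /K2_adj /K2_sgn.
case: (eqVneq a a') => [<- | ne] /=.
  rewrite !adj_irr !andbF !orbF /cp_sgn /= eqxx => Abb; have [H1 H2] := Hg _ _ Abb; split.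
    by move: H1; case: (f a).1; case: (g b).1; case: (g b').1.
  by rewrite H2; case: (f a).2; case: (g b).2; case: (g b').2.
move=> /andP [/eqP <- Aaa']; rewrite /cp_sgn /= (negbTE ne); have [H1 H2] := Hf _ _ Aaa'; split.
  by move: H1; case: (f a).1; case: (f a').1; case: (g b).1.
by rewrite H2; case: (f a).2; case: (f a').2; case: (g b).2.
Qed.

Definition sext n (s : rel 'I_n) (a b : nat) : bool :=
  if insub a is Some i then if insub b is Some j then s i j else false else false.

Fixpoint sw n (s : rel 'I_n) (k : nat) : bool :=
  if k is k'.+1 then sw s k' (+) sext s k' k else false.

Lemma path_pot n (s : rel 'I_n) (h : symmetric s) :
  potential (F := Psg h) (fun i => (odd i, sw s i)).
Proof.
have key : forall i j : 'I_n, i.+1 = j :> nat ->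
    odd i != odd j /\ s i j = sw s i (+) sw s j.
  move=> i j E; rewrite -E /=; split; first by case: (odd i).
  by rewrite /sext E !valK addKb.
move=> i j; rewrite /= /path_adj => /orP [/eqP E | /eqP E].
  exact: key.
have [H1 H2] := key _ _ E; split; first by rewrite eq_sym.
by rewrite h H2 addbC.
Qed.

Theorem corollary4p4 :
  (forall G F : sgraph, is_forest F -> has_edge F ->
     chi_s (G \square F) = chi_s (G \square K2plus)) /\
  (forall (n m : nat) (s1 : rel 'I_n) (h1 : symmetric s1)
          (s2 : rel 'I_m) (h2 : symmetric s2),
     2 <= n -> 2 <= m -> chi_s (Psg h1 \square Psg h2) = 2).
Proof.
split.
  move=> G F HF He; have [f Hf] := forest_pot HF.
  apply/eqP; rewrite eqn_leq (chi_le (hom_to_K2 G Hf)).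
  exact: (chi_le (hom_from_K2 G He)).
move=> n m s1 h1 s2 h2 hn hm.
rewrite /chi_s; case: ex_minnP => k Hk Hmin.
apply/eqP; rewrite eqn_leq; apply/andP; split.
  apply: Hmin; rewrite /has_hom_of_order.
  case: excluded_middle_informative => // [[]].
  exists K2plus; split; first exact: card_bool.
  exact: prod_to_K2 (@path_pot _ _ h1) (@path_pot _ _ h2).
move: Hk; rewrite /has_hom_of_order.
case: excluded_middle_informative => // [[H [cH [phi [X HX]]]]] _.
rewrite ltnNge; apply/negP => Hle.
pose i0 : 'I_n := Ordinal (ltn_trans (ltnSn 0) hn).
pose j0 : 'I_m := Ordinal (ltn_trans (ltnSn 0) hm).
pose j1 : 'I_m := Ordinal hm.
have A : @adj (Psg h1 \square Psg h2) (i0, j0) (i0, j1).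
  by rewrite /= /cp_adj /= /path_adj /= ?eqxx.
have [A' _] := HX _ _ A.
move: A'; rewrite -cH in Hle.
have -> : phi (i0, j1) = phi (i0, j0) by apply: (fintype_le1P _).
by rewrite adj_irr.
Qed.
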